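(* There exists a $CS(3,K_4^{(3)}+e,gn+2)$ of type $(g^n:2)$ for each $(g,n)\in\{(5,3),(5,5),(10,2)\}$.
   Context: $K_4^{(3)}+e$ denotes the 3-uniform hypergraph with vertex set $\{1,2,3,4,5\}$ and edge set $\{\{1,2,3\},\{1,2,4\},\{1,3,4\},\{2,3,4\},\{3,4,5\}\}$. A $CS(3,K_4^{(3)}+e,gn+s)$ of type $(g^n:s)$ is a quadruple $(X,S,\mathcal{T},\mathcal{A})$ where $|X|=gn+s$, $S\subseteq X$ with $|S|=s$ (the stem), $\mathcal{T}=\{G_1,\dots,G_n\}$ is a partition of $X\setminus S$ into $n$ groups of size $g$, and $\mathcal{A}$ is a collection of hypergraphs on subsets of $X$ (blocks), each isomorphic to $K_4^{(3)}+e$, such that every 3-subset $T\subseteq X$ with $|T\cap(S\cup G_i)|<3$ for all $i$ is an edge of exactly one block, and no 3-subset of any $S\cup G_i$ is an edge of any block. Here $s=2$. *)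

(* Defs.v *)
From mathcomp Require Import all_boot.
Set Implicit Arguments. Unset Strict Implicit. Unset Printing Implicit Defensive.

(* Edges of K_4^(3)+e on vertex set {0,..,4} (paper's {1,..,5} shifted by 1):
   {1,2,3},{1,2,4},{1,3,4},{2,3,4},{3,4,5}. *)
Definition K4e_edges : seq {set 'I_5} :=
  [:: [set inord 0; inord 1; inord 2];
      [set inord 0; inord 1; inord 3];
      [set inord 0; inord 2; inord 3];
      [set inord 1; inord 2; inord 3];
      [set inord 2; inord 3; inord 4]].

(* A block on X is a hypergraph given by its edge set (a set of 3-subsets of X);
   it is a copy of K_4^(3)+e if it is the image of K4e_edges under an injective
   vertex map 'I_5 -> X. (K_4^(3)+e has no isolated vertex, so the vertex set
   of the block is the image of the map.) *)
Definition is_K4e_copy (X : finType) (B : {set {set X}}) : Prop :=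
  exists f : 'I_5 -> X, injective f /\
    B = [set f @: e | e : {set 'I_5} in K4e_edges].

Definition is_CS_K4e (X : finType) (g n s : nat) (S : {set X})
    (T : {set {set X}}) (A : {set {set {set X}}}) : Prop :=
  [/\ #|X| = g * n + s /\ #|S| = s,
      [/\ partition T (~: S), #|T| = n & (forall G, G \in T -> #|G| = g)],
      (forall B, B \in A -> is_K4e_copy B),
      (forall E : {set X}, #|E| = 3 ->
         (forall G, G \in T -> #|E :&: (S :|: G)| < 3) ->
         #|[set B in A | E \in B]| = 1)
    & (forall G (E : {set X}) B, G \in T -> #|E| = 3 -> E \subset S :|: G ->
         B \in A -> E \notin B)].

Definition CS_K4e_exists (g n s : nat) : Prop :=
  exists (S : {set 'I_(g * n + s)}) T A, @is_CS_K4e _ g n s S T A.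

(* Main.v *)
Require Import Defs.
From mathcomp Require Import all_boot zify.
Unset Printing Implicit Defensive.

Definition PAT : seq (seq nat) :=
  [:: [:: 0; 1; 2]; [:: 0; 1; 3]; [:: 0; 2; 3]; [:: 1; 2; 3]; [:: 2; 3; 4]].
Definition nedges (p : seq nat) : seq (seq nat) :=
  [seq sort leq (map (nth 0 p) e) | e <- PAT].
Definition FL (L : seq (seq nat)) := flatten (map nedges L).
Definition inSG g n j x := (g * n <= x) || ((x < g * n) && (x %/ g == j)).
Definition okn g n x y z :=
  ~~ has (fun j => inSG g n j x && inSG g n j y && inSG g n j z) (iota 0 n).
Definition okt g n (t : seq nat) :=
  if t is [:: x; y; z] then okn g n x y z else false.
Definition goodp m (p : seq nat) :=
  (size p == 5) && uniq p && all (fun k => k <= m) p.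
Definition check2 g n m (F : seq (seq nat)) :=
  all (fun x => all (fun y => all (fun z =>
    if (x < y) && (y < z) then
      (if okn g n x y z then count_mem [:: x; y; z] F == 1 else true)
    else true) (iota 0 m.+1)) (iota 0 m.+1)) (iota 0 m.+1).

Definition fp m (p : seq nat) (i : 'I_5) : 'I_m.+1 := inord (nth 0 p i).
Definition mkB m (p : seq nat) : {set {set 'I_m.+1}} :=
  [set fp m p @: e | e : {set 'I_5} in K4e_edges].
Definition Sst g n m : {set 'I_m.+1} := [set i : 'I_m.+1 | g * n <= i].
Definition grp g n m (j : 'I_n) : {set 'I_m.+1} :=
  [set i : 'I_m.+1 | (i < g * n) && (i %/ g == j)].
Definition Tg g n m := [set grp g n m j | j : 'I_n].
Definition Ab m L := [set B | B \in map (mkB m) L].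
Definition T3 m p a b c : {set 'I_m.+1} :=
  [set inord (nth 0 p a); inord (nth 0 p b); inord (nth 0 p c)].

Definition checkP g n m :=
  [&& count (fun i => g * n <= i) (iota 0 m.+1) == 2,
      all (fun j => count (fun i => (i < g * n) && (i %/ g == j)) (iota 0 m.+1) == g) (iota 0 n),
      all (fun j => (j * g < g * n) && (j * g %/ g == j)) (iota 0 n)
    & all (fun x => (x < g * n) ==> (x %/ g < n)) (iota 0 m.+1)].

Lemma cardP N (P : pred nat) : #|[set i : 'I_N | P i]| = count P (iota 0 N).
Proof.
rewrite cardsE cardE -val_enum_ord count_map.
rewrite /enum_mem size_filter.
rewrite [X in _ = count _ X](eq_filter (a2 := predT)) ?filter_predT //.
Qed.

Lemma card3 N (E : {set 'I_N}) : #|E| = 3 ->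
  exists x y z : 'I_N, [/\ x < y, y < z & E = [set x; y; z]].
Proof.
move=> hE.
have hs : size (enum E) = 3 by rewrite -cardE.
have hso : sorted (fun a b : 'I_N => a < b) (enum E).
  have -> : enum E = [seq x <- enum 'I_N | x \in E].
    by rewrite /enum_mem filter_predT.
  apply: sorted_filter; first by move=> a b c; apply: ltn_trans.
  by rewrite -(sorted_map (f := val) (e' := ltn)) val_enum_ord iota_ltn_sorted.
case He: (enum E) hs hso => [|x [|y [|z [|? ?]]]] // _ /= /and3P [xy yz _].
exists x, y, z; split => //.
by apply/setP => w; rewrite -mem_enum He !inE orbA.
Qed.

Lemma set3_sort m (x y z : 'I_m.+1) (a b c : nat) : x < y -> y < z ->
  a <= m -> b <= m -> c <= m ->
  ([set x; y; z] == [set inord a; inord b; inord c] :> {set 'I_m.+1}) =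
  ([:: val x; val y; val z] == sort leq [:: a; b; c]).
Proof.
move=> xy yz am bm cm.
have memE : forall w : 'I_m.+1,
    (w \in ([set inord a; inord b; inord c] : {set 'I_m.+1})) = (val w \in [:: a; b; c]).
  by move=> w; rewrite !inE -!(inj_eq val_inj) /= !inordK ?ltnS // orbA.
have memX : forall w : 'I_m.+1,
    (w \in [set x; y; z]) = (val w \in [:: val x; val y; val z]).
  by move=> w; rewrite !inE -!(inj_eq val_inj) /= orbA.
apply/eqP/eqP.
- move=> hset.
  have hi : [:: a; b; c] =i [:: val x; val y; val z].
    move=> k; case: (ltnP k m.+1) => hk.
      by have := congr1 (fun S : {set 'I_m.+1} => Ordinal hk \in S) hset; rewrite memE memX /= => <-.
    rewrite !inE; apply/idP/idP.
      by case/or3P => /eqP ek; move: am bm cm hk; rewrite ek; lia.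
    by case/or3P => /eqP ek; move: (ltn_ord x) (ltn_ord y) (ltn_ord z) hk; rewrite ek /=; lia.
  have ux : uniq [:: val x; val y; val z].
    by rewrite /= !inE; move: xy yz; lia.
  have ua : uniq [:: a; b; c].
    by apply: (leq_size_uniq ux) => // k; rewrite hi.
  have hp : perm_eq [:: a; b; c] [:: val x; val y; val z] := uniq_perm ua ux hi.
  rewrite (perm_sortP leq_total leq_trans anti_leq _ _ hp) sorted_sort //=.
    exact: leq_trans.
  by rewrite (ltnW xy) (ltnW yz).
- move=> hs; apply/setP => w; rewrite memE memX hs mem_sort //.
Qed.

Lemma memB m p (E : {set 'I_m.+1}) : (E \in mkB m p) =
  [|| E == T3 m p 0 1 2, E == T3 m p 0 1 3, E == T3 m p 0 2 3,
      E == T3 m p 1 2 3 | E == T3 m p 2 3 4].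
Proof.
have key : forall a b c : nat, a < 5 -> b < 5 -> c < 5 ->
    fp m p @: ([set inord a; inord b; inord c] : {set 'I_5}) = T3 m p a b c.
  by move=> a b c ha hb hc; rewrite !imsetU !imset_set1 /fp !inordK.
apply/imsetP/idP.
- move=> [e]; rewrite /K4e_edges !inE.
  by move=> /orP [|/orP [|/orP [|/orP []]]] /eqP -> ->; rewrite key // eqxx ?orbT.
- move=> /orP [|/orP [|/orP [|/orP []]]] /eqP ->;
   [ exists ([set inord 0; inord 1; inord 2] : {set 'I_5})
   | exists ([set inord 0; inord 1; inord 3] : {set 'I_5})
   | exists ([set inord 0; inord 2; inord 3] : {set 'I_5})
   | exists ([set inord 1; inord 2; inord 3] : {set 'I_5})
   | exists ([set inord 2; inord 3; inord 4] : {set 'I_5}) ];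
   rewrite ?key // /K4e_edges !inE eqxx ?orbT //.
Qed.

Lemma bridge m p (x y z : 'I_m.+1) : goodp m p -> x < y -> y < z ->
  ([set x; y; z] \in mkB m p) = ([:: val x; val y; val z] \in nedges p).
Proof.
case/andP => /andP [/eqP hsz _] hall xy yz.
have hk : forall k, k < 5 -> nth 0 p k <= m.
  by move=> k hk; apply: (allP hall); rewrite mem_nth // hsz.
rewrite memB /nedges /T3 /= !inE !(@set3_sort m x y z _ _ _ xy yz) ?hk //.
Qed.

Lemma count_le1 (T : eqType) (P : pred T) (L : seq T) p q :
  count P L <= 1 -> p \in L -> q \in L -> P p -> P q -> p = q.
Proof.
have cpos : forall (L : seq T) r, r \in L -> P r -> 0 < count P L.
  by move=> L' r hr Pr; rewrite -has_count; apply/hasP; exists r.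
elim: L => // h L IH /= hc /predU1P [->|hp] /predU1P [->|hq] Pp Pq //.
- by move: hc (cpos _ _ hq Pq); rewrite Pp add1n ltnS leqn0 => /eqP ->.
- by move: hc (cpos _ _ hp Pp); rewrite Pq add1n ltnS leqn0 => /eqP ->.
- by apply: IH => //; apply: leq_trans hc; apply: leq_addl.
Qed.

Lemma count_FL (t : seq nat) L :
  count (fun p => t \in nedges p) L <= count_mem t (FL L).
Proof.
elim: L => [//|p L IH]; rewrite (_ : FL (p :: L) = nedges p ++ FL L) // count_cat [count _ (_ :: _)]/=.
apply: leq_add => //.
by case: (boolP (t \in nedges p)) => //= h; rewrite -has_pred1 has_count in h.
Qed.

Lemma gen g n m L : g * n + 2 = m.+1 -> all (goodp m) L ->
  all (okt g n) (FL L) -> check2 g n m (FL L) -> checkP g n m ->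
  CS_K4e_exists g n 2.
Proof.
move=> Hm hL h1 h2 hP.
rewrite /CS_K4e_exists Hm.
case/and4P: hP => /eqP cS /allP cG /allP wit /allP covn.
have witO : forall j : 'I_n, exists w : 'I_m.+1, w \in grp g n m j.
  move=> j; have hjn : nat_of_ord j \in iota 0 n by rewrite mem_iota /=.
  have /andP [h1w h2w] := wit j hjn.
  have hw : j * g < m.+1 by rewrite -Hm; apply: (leq_trans h1w); rewrite leq_addr.
  by exists (Ordinal hw); rewrite inE /= h1w.
exists (Sst g n m), (Tg g n m), (Ab m L).
have ok_of : forall (x y z : 'I_m.+1), okn g n x y z ->
    forall j : 'I_n, ~~ ([set x; y; z] \subset Sst g n m :|: grp g n m j).
  move=> x y z ok j; apply/negP => hsub; move/negP: ok; apply.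
  apply/hasP; exists (nat_of_ord j); first by rewrite mem_iota /=.
  have hw : forall w, w \in [set x; y; z] -> inSG g n j w.
    by move=> w hw; have := subsetP hsub w hw; rewrite !inE.
  by rewrite !hw // !inE eqxx ?orbT.
split.
- by split; [rewrite card_ord | rewrite /Sst cardP].
- split.
  + apply/and3P; split.
    * apply/eqP/setP => x; rewrite /cover in_setC.
      apply/bigcupP/idP.
        case => B /imsetP [j _ ->]; rewrite !inE => /andP [hx _].
        by rewrite -ltnNge.
      rewrite inE -ltnNge => hx.
      have hxi : nat_of_ord x \in iota 0 m.+1 by rewrite mem_iota /=.
      have hj : x %/ g < n by apply: (implyP (covn x hxi)).
      exists (grp g n m (Ordinal hj)); first by apply/imsetP; exists (Ordinal hj).
      by rewrite inE hx /=.
    * apply/trivIsetP => A B /imsetP [j _ ->] /imsetP [k _ ->] hne.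
      rewrite -setI_eq0; apply/eqP/setP => x; rewrite !inE.
      apply/negP => /andP [/andP [_ /eqP hj] /andP [_ /eqP hk]].
      by move/eqP: hne; apply; congr grp; apply: val_inj; rewrite /= -hj -hk.
    * apply/imsetP => [[j _ h]]; have [w hw] := witO j.
      by move: hw; rewrite -h inE.
  + rewrite card_imset ?card_ord //.
    move=> j k h; have [w hw] := witO j; move: (hw); rewrite h !inE.
    case/andP => _ /eqP hk; move: hw; rewrite inE => /andP [_ /eqP hj].
    by apply: val_inj; rewrite /= -hj -hk.
  + move=> G /imsetP [j _ ->]; rewrite /grp (cardP _ (fun i => (i < g * n) && (i %/ g == j))); apply/eqP.
    by apply: cG; rewrite mem_iota /=.
- move=> B; rewrite inE => /mapP [p hp ->].
  exists (fp m p); split => //.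
  have := allP hL p hp; case/andP => /andP [/eqP hsz hu] hall.
  have hk : forall i : 'I_5, nth 0 p i < m.+1.
    by move=> i; rewrite ltnS; apply: (allP hall); rewrite mem_nth // hsz.
  move=> i j; rewrite /fp => /(congr1 (@nat_of_ord _)); rewrite !inordK //.
  by move/eqP; rewrite nth_uniq ?hsz // => /eqP h; apply: val_inj.
- move=> E hE hG.
  have [x [y [z [xy yz hEq]]]] := card3 _ _ hE; subst E.
  have okxyz : okn g n x y z.
    apply/hasPn => j; rewrite mem_iota add0n /= => hj.
    apply/negP => /andP [/andP [hx hy] hz].
    have hT : grp g n m (Ordinal hj) \in Tg g n m by apply/imsetP; exists (Ordinal hj).
    have := hG _ hT.
    rewrite (setIidPl _) ?hE //.
    by apply/subsetP => w; rewrite !inE; move=> /orP [/orP [] | ] /eqP ->.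
  set t := [:: val x; val y; val z].
  have c1 : count_mem t (FL L) = 1.
    have mi : forall w : 'I_m.+1, val w \in iota 0 m.+1 by move=> w; rewrite mem_iota /=.
    move: h2 => /allP /(_ (val x) (mi x)) /allP /(_ (val y) (mi y)).
    move=> /allP /(_ (val z) (mi z)).
    by rewrite xy yz okxyz /= => /eqP.
  have tin : t \in FL L by rewrite -has_pred1 has_count c1.
  have [p0 hp0 tp0] : exists2 p, p \in L & t \in nedges p
    by apply/flatten_mapP.
  apply/eqP/cards1P; exists (mkB m p0).
  apply/setP => B; rewrite !inE; apply/andP/eqP.
  + case => /mapP [p hp ->] hE'.
    rewrite (bridge _ _ _ _ _ (allP hL p hp) xy yz) in hE'.
    rewrite (@count_le1 _ (fun p => t \in nedges p) L p p0 _ hp hp0 hE' tp0) //.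
    by rewrite -c1 count_FL.
  + move=> ->; split; first by apply/mapP; exists p0.
    by rewrite bridge // (allP hL).
- move=> G E B /imsetP [j _ ->] hE hsub; rewrite inE => /mapP [p hp ->].
  have [x [y [z [xy yz hEq]]]] := card3 _ _ hE; subst E.
  rewrite bridge ?(allP hL) //; apply/negP => ht.
  have hin : [:: val x; val y; val z] \in FL L by apply/flatten_mapP; exists p.
  have := allP h1 _ hin.
  by move=> /= ok; move: (ok_of x y z ok j); rewrite hsub.
Qed.

Definition L53 : seq (seq nat) := [:: [:: 5; 16; 0; 11; 1];
  [:: 6; 16; 1; 12; 2];
  [:: 7; 16; 2; 13; 3];
  [:: 8; 16; 3; 14; 4];
  [:: 9; 16; 4; 10; 0];
  [:: 1; 5; 0; 8; 9];
  [:: 2; 6; 1; 9; 5];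
  [:: 3; 7; 2; 5; 6];
  [:: 4; 8; 3; 6; 7];
  [:: 0; 9; 4; 7; 8];
  [:: 13; 16; 0; 6; 15];
  [:: 14; 16; 1; 7; 15];
  [:: 10; 16; 2; 8; 15];
  [:: 11; 16; 3; 9; 15];
  [:: 12; 16; 4; 5; 15];
  [:: 0; 7; 11; 15; 3];
  [:: 1; 8; 12; 15; 4];
  [:: 2; 9; 13; 15; 0];
  [:: 3; 5; 14; 15; 1];
  [:: 4; 6; 10; 15; 2];
  [:: 0; 5; 2; 9; 10];
  [:: 1; 6; 3; 5; 11];
  [:: 2; 7; 4; 6; 12];
  [:: 3; 8; 0; 7; 13];
  [:: 4; 9; 1; 8; 14];
  [:: 11; 14; 5; 7; 0];
  [:: 12; 10; 6; 8; 1];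
  [:: 13; 11; 7; 9; 2];
  [:: 14; 12; 8; 5; 3];
  [:: 10; 13; 9; 6; 4];
  [:: 6; 12; 0; 5; 3];
  [:: 7; 13; 1; 6; 4];
  [:: 8; 14; 2; 7; 0];
  [:: 9; 10; 3; 8; 1];
  [:: 5; 11; 4; 9; 2];
  [:: 7; 13; 5; 12; 15];
  [:: 8; 14; 6; 13; 15];
  [:: 9; 10; 7; 14; 15];
  [:: 5; 11; 8; 10; 15];
  [:: 6; 12; 9; 11; 15];
  [:: 0; 6; 1; 10; 7];
  [:: 1; 7; 2; 11; 8];
  [:: 2; 8; 3; 12; 9];
  [:: 3; 9; 4; 13; 5];
  [:: 4; 5; 0; 14; 6];
  [:: 10; 16; 0; 7; 6];
  [:: 11; 16; 1; 8; 7];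
  [:: 12; 16; 2; 9; 8];
  [:: 13; 16; 3; 5; 9];
  [:: 14; 16; 4; 6; 5];
  [:: 5; 6; 11; 13; 2];
  [:: 6; 7; 12; 14; 3];
  [:: 7; 8; 13; 10; 4];
  [:: 8; 9; 14; 11; 0];
  [:: 9; 5; 10; 12; 1];
  [:: 9; 16; 0; 14; 7];
  [:: 5; 16; 1; 10; 8];
  [:: 6; 16; 2; 11; 9];
  [:: 7; 16; 3; 12; 5];
  [:: 8; 16; 4; 13; 6];
  [:: 14; 15; 0; 8; 10];
  [:: 10; 15; 1; 9; 11];
  [:: 11; 15; 2; 5; 12];
  [:: 12; 15; 3; 6; 13];
  [:: 13; 15; 4; 7; 14];
  [:: 0; 2; 10; 13; 1];
  [:: 1; 3; 11; 14; 2];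
  [:: 2; 4; 12; 10; 3];
  [:: 3; 0; 13; 11; 4];
  [:: 4; 1; 14; 12; 0];
  [:: 2; 6; 0; 8; 13];
  [:: 3; 7; 1; 9; 14];
  [:: 4; 8; 2; 5; 10];
  [:: 0; 9; 3; 6; 11];
  [:: 1; 5; 4; 7; 12];
  [:: 13; 14; 0; 1; 9];
  [:: 14; 10; 1; 2; 5];
  [:: 10; 11; 2; 3; 6];
  [:: 11; 12; 3; 4; 7];
  [:: 12; 13; 4; 0; 8];
  [:: 8; 16; 0; 12; 3];
  [:: 9; 16; 1; 13; 4];
  [:: 5; 16; 2; 14; 0];
  [:: 6; 16; 3; 10; 1];
  [:: 7; 16; 4; 11; 2];
  [:: 2; 12; 0; 11; 8];
  [:: 3; 13; 1; 12; 9];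
  [:: 4; 14; 2; 13; 5];
  [:: 0; 10; 3; 14; 6];
  [:: 1; 11; 4; 10; 7];
  [:: 6; 14; 5; 10; 13];
  [:: 7; 10; 6; 11; 14];
  [:: 8; 11; 7; 12; 10];
  [:: 9; 12; 8; 13; 11];
  [:: 5; 13; 9; 14; 12];
  [:: 10; 15; 0; 5; 13];
  [:: 11; 15; 1; 6; 14];
  [:: 12; 15; 2; 7; 10];
  [:: 13; 15; 3; 8; 11];
  [:: 14; 15; 4; 9; 12];
  [:: 1; 7; 0; 12; 10];
  [:: 2; 8; 1; 13; 11];
  [:: 3; 9; 2; 14; 12];
  [:: 4; 5; 3; 10; 13];
  [:: 0; 6; 4; 11; 14];
  [:: 10; 11; 0; 9; 13];
  [:: 11; 12; 1; 5; 14];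
  [:: 12; 13; 2; 6; 10];
  [:: 13; 14; 3; 7; 11];
  [:: 14; 10; 4; 8; 12];
  [:: 0; 15; 9; 12; 7];
  [:: 1; 15; 5; 13; 8];
  [:: 2; 15; 6; 14; 9];
  [:: 3; 15; 7; 10; 5];
  [:: 4; 15; 8; 11; 6]].

Definition L55 : seq (seq nat) := [:: [:: 0; 2; 7; 12; 25];
  [:: 1; 3; 8; 13; 25];
  [:: 2; 4; 9; 14; 25];
  [:: 3; 0; 5; 10; 25];
  [:: 4; 1; 6; 11; 25];
  [:: 5; 7; 12; 17; 25];
  [:: 6; 8; 13; 18; 25];
  [:: 7; 9; 14; 19; 25];
  [:: 8; 5; 10; 15; 25];
  [:: 9; 6; 11; 16; 25];
  [:: 10; 12; 17; 22; 25];
  [:: 11; 13; 18; 23; 25];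
  [:: 12; 14; 19; 24; 25];
  [:: 13; 10; 15; 20; 25];
  [:: 14; 11; 16; 21; 25];
  [:: 15; 17; 22; 2; 25];
  [:: 16; 18; 23; 3; 25];
  [:: 17; 19; 24; 4; 25];
  [:: 18; 15; 20; 0; 25];
  [:: 19; 16; 21; 1; 25];
  [:: 20; 22; 2; 7; 25];
  [:: 21; 23; 3; 8; 25];
  [:: 22; 24; 4; 9; 25];
  [:: 23; 20; 0; 5; 25];
  [:: 24; 21; 1; 6; 25];
  [:: 5; 19; 0; 2; 6];
  [:: 6; 15; 1; 3; 7];
  [:: 7; 16; 2; 4; 8];
  [:: 8; 17; 3; 0; 9];
  [:: 9; 18; 4; 1; 5];
  [:: 10; 24; 5; 7; 11];
  [:: 11; 20; 6; 8; 12];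
  [:: 12; 21; 7; 9; 13];
  [:: 13; 22; 8; 5; 14];
  [:: 14; 23; 9; 6; 10];
  [:: 15; 4; 10; 12; 16];
  [:: 16; 0; 11; 13; 17];
  [:: 17; 1; 12; 14; 18];
  [:: 18; 2; 13; 10; 19];
  [:: 19; 3; 14; 11; 15];
  [:: 20; 9; 15; 17; 21];
  [:: 21; 5; 16; 18; 22];
  [:: 22; 6; 17; 19; 23];
  [:: 23; 7; 18; 15; 24];
  [:: 24; 8; 19; 16; 20];
  [:: 0; 14; 20; 22; 1];
  [:: 1; 10; 21; 23; 2];
  [:: 2; 11; 22; 24; 3];
  [:: 3; 12; 23; 20; 4];
  [:: 4; 13; 24; 21; 0];
  [:: 5; 26; 0; 13; 12];
  [:: 6; 26; 1; 14; 13];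
  [:: 7; 26; 2; 10; 14];
  [:: 8; 26; 3; 11; 10];
  [:: 9; 26; 4; 12; 11];
  [:: 10; 26; 5; 18; 17];
  [:: 11; 26; 6; 19; 18];
  [:: 12; 26; 7; 15; 19];
  [:: 13; 26; 8; 16; 15];
  [:: 14; 26; 9; 17; 16];
  [:: 15; 26; 10; 23; 22];
  [:: 16; 26; 11; 24; 23];
  [:: 17; 26; 12; 20; 24];
  [:: 18; 26; 13; 21; 20];
  [:: 19; 26; 14; 22; 21];
  [:: 20; 26; 15; 3; 2];
  [:: 21; 26; 16; 4; 3];
  [:: 22; 26; 17; 0; 4];
  [:: 23; 26; 18; 1; 0];
  [:: 24; 26; 19; 2; 1];
  [:: 0; 26; 20; 8; 7];
  [:: 1; 26; 21; 9; 8];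
  [:: 2; 26; 22; 5; 9];
  [:: 3; 26; 23; 6; 5];
  [:: 4; 26; 24; 7; 6];
  [:: 2; 10; 0; 23; 13];
  [:: 3; 11; 1; 24; 14];
  [:: 4; 12; 2; 20; 10];
  [:: 0; 13; 3; 21; 11];
  [:: 1; 14; 4; 22; 12];
  [:: 7; 15; 5; 3; 18];
  [:: 8; 16; 6; 4; 19];
  [:: 9; 17; 7; 0; 15];
  [:: 5; 18; 8; 1; 16];
  [:: 6; 19; 9; 2; 17];
  [:: 12; 20; 10; 8; 23];
  [:: 13; 21; 11; 9; 24];
  [:: 14; 22; 12; 5; 20];
  [:: 10; 23; 13; 6; 21];
  [:: 11; 24; 14; 7; 22];
  [:: 17; 0; 15; 13; 3];
  [:: 18; 1; 16; 14; 4];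
  [:: 19; 2; 17; 10; 0];
  [:: 15; 3; 18; 11; 1];
  [:: 16; 4; 19; 12; 2];
  [:: 22; 5; 20; 18; 8];
  [:: 23; 6; 21; 19; 9];
  [:: 24; 7; 22; 15; 5];
  [:: 20; 8; 23; 16; 6];
  [:: 21; 9; 24; 17; 7];
  [:: 0; 15; 2; 11; 7];
  [:: 1; 16; 3; 12; 8];
  [:: 2; 17; 4; 13; 9];
  [:: 3; 18; 0; 14; 5];
  [:: 4; 19; 1; 10; 6];
  [:: 5; 20; 7; 16; 12];
  [:: 6; 21; 8; 17; 13];
  [:: 7; 22; 9; 18; 14];
  [:: 8; 23; 5; 19; 10];
  [:: 9; 24; 6; 15; 11];
  [:: 10; 0; 12; 21; 17];
  [:: 11; 1; 13; 22; 18];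
  [:: 12; 2; 14; 23; 19];
  [:: 13; 3; 10; 24; 15];
  [:: 14; 4; 11; 20; 16];
  [:: 15; 5; 17; 1; 22];
  [:: 16; 6; 18; 2; 23];
  [:: 17; 7; 19; 3; 24];
  [:: 18; 8; 15; 4; 20];
  [:: 19; 9; 16; 0; 21];
  [:: 20; 10; 22; 6; 2];
  [:: 21; 11; 23; 7; 3];
  [:: 22; 12; 24; 8; 4];
  [:: 23; 13; 20; 9; 0];
  [:: 24; 14; 21; 5; 1];
  [:: 1; 7; 0; 21; 2];
  [:: 2; 8; 1; 22; 3];
  [:: 3; 9; 2; 23; 4];
  [:: 4; 5; 3; 24; 0];
  [:: 0; 6; 4; 20; 1];
  [:: 6; 12; 5; 1; 7];
  [:: 7; 13; 6; 2; 8];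
  [:: 8; 14; 7; 3; 9];
  [:: 9; 10; 8; 4; 5];
  [:: 5; 11; 9; 0; 6];
  [:: 11; 17; 10; 6; 12];
  [:: 12; 18; 11; 7; 13];
  [:: 13; 19; 12; 8; 14];
  [:: 14; 15; 13; 9; 10];
  [:: 10; 16; 14; 5; 11];
  [:: 16; 22; 15; 11; 17];
  [:: 17; 23; 16; 12; 18];
  [:: 18; 24; 17; 13; 19];
  [:: 19; 20; 18; 14; 15];
  [:: 15; 21; 19; 10; 16];
  [:: 21; 2; 20; 16; 22];
  [:: 22; 3; 21; 17; 23];
  [:: 23; 4; 22; 18; 24];
  [:: 24; 0; 23; 19; 20];
  [:: 20; 1; 24; 15; 21];
  [:: 8; 12; 0; 25; 10];
  [:: 9; 13; 1; 25; 11];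
  [:: 5; 14; 2; 25; 12];
  [:: 6; 10; 3; 25; 13];
  [:: 7; 11; 4; 25; 14];
  [:: 13; 17; 5; 25; 15];
  [:: 14; 18; 6; 25; 16];
  [:: 10; 19; 7; 25; 17];
  [:: 11; 15; 8; 25; 18];
  [:: 12; 16; 9; 25; 19];
  [:: 18; 22; 10; 25; 20];
  [:: 19; 23; 11; 25; 21];
  [:: 15; 24; 12; 25; 22];
  [:: 16; 20; 13; 25; 23];
  [:: 17; 21; 14; 25; 24];
  [:: 23; 2; 15; 25; 0];
  [:: 24; 3; 16; 25; 1];
  [:: 20; 4; 17; 25; 2];
  [:: 21; 0; 18; 25; 3];
  [:: 22; 1; 19; 25; 4];
  [:: 3; 7; 20; 25; 5];
  [:: 4; 8; 21; 25; 6];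
  [:: 0; 9; 22; 25; 7];
  [:: 1; 5; 23; 25; 8];
  [:: 2; 6; 24; 25; 9];
  [:: 5; 22; 0; 1; 23];
  [:: 6; 23; 1; 2; 24];
  [:: 7; 24; 2; 3; 20];
  [:: 8; 20; 3; 4; 21];
  [:: 9; 21; 4; 0; 22];
  [:: 10; 2; 5; 6; 3];
  [:: 11; 3; 6; 7; 4];
  [:: 12; 4; 7; 8; 0];
  [:: 13; 0; 8; 9; 1];
  [:: 14; 1; 9; 5; 2];
  [:: 15; 7; 10; 11; 8];
  [:: 16; 8; 11; 12; 9];
  [:: 17; 9; 12; 13; 5];
  [:: 18; 5; 13; 14; 6];
  [:: 19; 6; 14; 10; 7];
  [:: 20; 12; 15; 16; 13];
  [:: 21; 13; 16; 17; 14];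
  [:: 22; 14; 17; 18; 10];
  [:: 23; 10; 18; 19; 11];
  [:: 24; 11; 19; 15; 12];
  [:: 0; 17; 20; 21; 18];
  [:: 1; 18; 21; 22; 19];
  [:: 2; 19; 22; 23; 15];
  [:: 3; 15; 23; 24; 16];
  [:: 4; 16; 24; 20; 17];
  [:: 0; 14; 1; 19; 26];
  [:: 1; 10; 2; 15; 26];
  [:: 2; 11; 3; 16; 26];
  [:: 3; 12; 4; 17; 26];
  [:: 4; 13; 0; 18; 26];
  [:: 5; 19; 6; 24; 26];
  [:: 6; 15; 7; 20; 26];
  [:: 7; 16; 8; 21; 26];
  [:: 8; 17; 9; 22; 26];
  [:: 9; 18; 5; 23; 26];
  [:: 10; 24; 11; 4; 26];
  [:: 11; 20; 12; 0; 26];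
  [:: 12; 21; 13; 1; 26];
  [:: 13; 22; 14; 2; 26];
  [:: 14; 23; 10; 3; 26];
  [:: 15; 4; 16; 9; 26];
  [:: 16; 0; 17; 5; 26];
  [:: 17; 1; 18; 6; 26];
  [:: 18; 2; 19; 7; 26];
  [:: 19; 3; 15; 8; 26];
  [:: 20; 9; 21; 14; 26];
  [:: 21; 5; 22; 10; 26];
  [:: 22; 6; 23; 11; 26];
  [:: 23; 7; 24; 12; 26];
  [:: 24; 8; 20; 13; 26];
  [:: 1; 20; 0; 16; 4];
  [:: 2; 21; 1; 17; 0];
  [:: 3; 22; 2; 18; 1];
  [:: 4; 23; 3; 19; 2];
  [:: 0; 24; 4; 15; 3];
  [:: 6; 0; 5; 21; 9];
  [:: 7; 1; 6; 22; 5];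
  [:: 8; 2; 7; 23; 6];
  [:: 9; 3; 8; 24; 7];
  [:: 5; 4; 9; 20; 8];
  [:: 11; 5; 10; 1; 14];
  [:: 12; 6; 11; 2; 10];
  [:: 13; 7; 12; 3; 11];
  [:: 14; 8; 13; 4; 12];
  [:: 10; 9; 14; 0; 13];
  [:: 16; 10; 15; 6; 19];
  [:: 17; 11; 16; 7; 15];
  [:: 18; 12; 17; 8; 16];
  [:: 19; 13; 18; 9; 17];
  [:: 15; 14; 19; 5; 18];
  [:: 21; 15; 20; 11; 24];
  [:: 22; 16; 21; 12; 20];
  [:: 23; 17; 22; 13; 21];
  [:: 24; 18; 23; 14; 22];
  [:: 20; 19; 24; 10; 23];
  [:: 0; 22; 2; 16; 17];
  [:: 1; 23; 3; 17; 18];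
  [:: 2; 24; 4; 18; 19];
  [:: 3; 20; 0; 19; 15];
  [:: 4; 21; 1; 15; 16];
  [:: 5; 2; 7; 21; 22];
  [:: 6; 3; 8; 22; 23];
  [:: 7; 4; 9; 23; 24];
  [:: 8; 0; 5; 24; 20];
  [:: 9; 1; 6; 20; 21];
  [:: 10; 7; 12; 1; 2];
  [:: 11; 8; 13; 2; 3];
  [:: 12; 9; 14; 3; 4];
  [:: 13; 5; 10; 4; 0];
  [:: 14; 6; 11; 0; 1];
  [:: 15; 12; 17; 6; 7];
  [:: 16; 13; 18; 7; 8];
  [:: 17; 14; 19; 8; 9];
  [:: 18; 10; 15; 9; 5];
  [:: 19; 11; 16; 5; 6];
  [:: 20; 17; 22; 11; 12];
  [:: 21; 18; 23; 12; 13];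
  [:: 22; 19; 24; 13; 14];
  [:: 23; 15; 20; 14; 10];
  [:: 24; 16; 21; 10; 11];
  [:: 1; 9; 0; 15; 10];
  [:: 2; 5; 1; 16; 11];
  [:: 3; 6; 2; 17; 12];
  [:: 4; 7; 3; 18; 13];
  [:: 0; 8; 4; 19; 14];
  [:: 6; 14; 5; 20; 15];
  [:: 7; 10; 6; 21; 16];
  [:: 8; 11; 7; 22; 17];
  [:: 9; 12; 8; 23; 18];
  [:: 5; 13; 9; 24; 19];
  [:: 11; 19; 10; 0; 20];
  [:: 12; 15; 11; 1; 21];
  [:: 13; 16; 12; 2; 22];
  [:: 14; 17; 13; 3; 23];
  [:: 10; 18; 14; 4; 24];
  [:: 16; 24; 15; 5; 0];
  [:: 17; 20; 16; 6; 1];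
  [:: 18; 21; 17; 7; 2];
  [:: 19; 22; 18; 8; 3];
  [:: 15; 23; 19; 9; 4];
  [:: 21; 4; 20; 10; 5];
  [:: 22; 0; 21; 11; 6];
  [:: 23; 1; 22; 12; 7];
  [:: 24; 2; 23; 13; 8];
  [:: 20; 3; 24; 14; 9];
  [:: 0; 2; 9; 18; 25];
  [:: 1; 3; 5; 19; 25];
  [:: 2; 4; 6; 15; 25];
  [:: 3; 0; 7; 16; 25];
  [:: 4; 1; 8; 17; 25];
  [:: 5; 7; 14; 23; 25];
  [:: 6; 8; 10; 24; 25];
  [:: 7; 9; 11; 20; 25];
  [:: 8; 5; 12; 21; 25];
  [:: 9; 6; 13; 22; 25];
  [:: 10; 12; 19; 3; 25];
  [:: 11; 13; 15; 4; 25];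
  [:: 12; 14; 16; 0; 25];
  [:: 13; 10; 17; 1; 25];
  [:: 14; 11; 18; 2; 25];
  [:: 15; 17; 24; 8; 25];
  [:: 16; 18; 20; 9; 25];
  [:: 17; 19; 21; 5; 25];
  [:: 18; 15; 22; 6; 25];
  [:: 19; 16; 23; 7; 25];
  [:: 20; 22; 4; 13; 25];
  [:: 21; 23; 0; 14; 25];
  [:: 22; 24; 1; 10; 25];
  [:: 23; 20; 2; 11; 25];
  [:: 24; 21; 3; 12; 25];
  [:: 0; 8; 1; 10; 20];
  [:: 1; 9; 2; 11; 21];
  [:: 2; 5; 3; 12; 22];
  [:: 3; 6; 4; 13; 23];
  [:: 4; 7; 0; 14; 24];
  [:: 5; 13; 6; 15; 0];
  [:: 6; 14; 7; 16; 1];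
  [:: 7; 10; 8; 17; 2];
  [:: 8; 11; 9; 18; 3];
  [:: 9; 12; 5; 19; 4];
  [:: 10; 18; 11; 20; 5];
  [:: 11; 19; 12; 21; 6];
  [:: 12; 15; 13; 22; 7];
  [:: 13; 16; 14; 23; 8];
  [:: 14; 17; 10; 24; 9];
  [:: 15; 23; 16; 0; 10];
  [:: 16; 24; 17; 1; 11];
  [:: 17; 20; 18; 2; 12];
  [:: 18; 21; 19; 3; 13];
  [:: 19; 22; 15; 4; 14];
  [:: 20; 3; 21; 5; 15];
  [:: 21; 4; 22; 6; 16];
  [:: 22; 0; 23; 7; 17];
  [:: 23; 1; 24; 8; 18];
  [:: 24; 2; 20; 9; 19];
  [:: 0; 17; 2; 24; 10];
  [:: 1; 18; 3; 20; 11];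
  [:: 2; 19; 4; 21; 12];
  [:: 3; 15; 0; 22; 13];
  [:: 4; 16; 1; 23; 14];
  [:: 5; 22; 7; 4; 15];
  [:: 6; 23; 8; 0; 16];
  [:: 7; 24; 9; 1; 17];
  [:: 8; 20; 5; 2; 18];
  [:: 9; 21; 6; 3; 19];
  [:: 10; 2; 12; 9; 20];
  [:: 11; 3; 13; 5; 21];
  [:: 12; 4; 14; 6; 22];
  [:: 13; 0; 10; 7; 23];
  [:: 14; 1; 11; 8; 24];
  [:: 15; 7; 17; 14; 0];
  [:: 16; 8; 18; 10; 1];
  [:: 17; 9; 19; 11; 2];
  [:: 18; 5; 15; 12; 3];
  [:: 19; 6; 16; 13; 4];
  [:: 20; 12; 22; 19; 5];
  [:: 21; 13; 23; 15; 6];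
  [:: 22; 14; 24; 16; 7];
  [:: 23; 10; 20; 17; 8];
  [:: 24; 11; 21; 18; 9];
  [:: 7; 26; 0; 11; 8];
  [:: 8; 26; 1; 12; 9];
  [:: 9; 26; 2; 13; 5];
  [:: 5; 26; 3; 14; 6];
  [:: 6; 26; 4; 10; 7];
  [:: 12; 26; 5; 16; 13];
  [:: 13; 26; 6; 17; 14];
  [:: 14; 26; 7; 18; 10];
  [:: 10; 26; 8; 19; 11];
  [:: 11; 26; 9; 15; 12];
  [:: 17; 26; 10; 21; 18];
  [:: 18; 26; 11; 22; 19];
  [:: 19; 26; 12; 23; 15];
  [:: 15; 26; 13; 24; 16];
  [:: 16; 26; 14; 20; 17];
  [:: 22; 26; 15; 1; 23];
  [:: 23; 26; 16; 2; 24];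
  [:: 24; 26; 17; 3; 20];
  [:: 20; 26; 18; 4; 21];
  [:: 21; 26; 19; 0; 22];
  [:: 2; 26; 20; 6; 3];
  [:: 3; 26; 21; 7; 4];
  [:: 4; 26; 22; 8; 0];
  [:: 0; 26; 23; 9; 1];
  [:: 1; 26; 24; 5; 2];
  [:: 0; 6; 19; 25; 21];
  [:: 1; 7; 15; 25; 22];
  [:: 2; 8; 16; 25; 23];
  [:: 3; 9; 17; 25; 24];
  [:: 4; 5; 18; 25; 20];
  [:: 5; 11; 24; 25; 1];
  [:: 6; 12; 20; 25; 2];
  [:: 7; 13; 21; 25; 3];
  [:: 8; 14; 22; 25; 4];
  [:: 9; 10; 23; 25; 0];
  [:: 10; 16; 4; 25; 6];
  [:: 11; 17; 0; 25; 7];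
  [:: 12; 18; 1; 25; 8];
  [:: 13; 19; 2; 25; 9];
  [:: 14; 15; 3; 25; 5];
  [:: 15; 21; 9; 25; 11];
  [:: 16; 22; 5; 25; 12];
  [:: 17; 23; 6; 25; 13];
  [:: 18; 24; 7; 25; 14];
  [:: 19; 20; 8; 25; 10];
  [:: 20; 1; 14; 25; 16];
  [:: 21; 2; 10; 25; 17];
  [:: 22; 3; 11; 25; 18];
  [:: 23; 4; 12; 25; 19];
  [:: 24; 0; 13; 25; 15];
  [:: 6; 10; 0; 18; 11];
  [:: 7; 11; 1; 19; 12];
  [:: 8; 12; 2; 15; 13];
  [:: 9; 13; 3; 16; 14];
  [:: 5; 14; 4; 17; 10];
  [:: 11; 15; 5; 23; 16];
  [:: 12; 16; 6; 24; 17];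
  [:: 13; 17; 7; 20; 18];
  [:: 14; 18; 8; 21; 19];
  [:: 10; 19; 9; 22; 15];
  [:: 16; 20; 10; 3; 21];
  [:: 17; 21; 11; 4; 22];
  [:: 18; 22; 12; 0; 23];
  [:: 19; 23; 13; 1; 24];
  [:: 15; 24; 14; 2; 20];
  [:: 21; 0; 15; 8; 1];
  [:: 22; 1; 16; 9; 2];
  [:: 23; 2; 17; 5; 3];
  [:: 24; 3; 18; 6; 4];
  [:: 20; 4; 19; 7; 0];
  [:: 1; 5; 20; 13; 6];
  [:: 2; 6; 21; 14; 7];
  [:: 3; 7; 22; 10; 8];
  [:: 4; 8; 23; 11; 9];
  [:: 0; 9; 24; 12; 5];
  [:: 6; 13; 0; 1; 24];
  [:: 7; 14; 1; 2; 20];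
  [:: 8; 10; 2; 3; 21];
  [:: 9; 11; 3; 4; 22];
  [:: 5; 12; 4; 0; 23];
  [:: 11; 18; 5; 6; 4];
  [:: 12; 19; 6; 7; 0];
  [:: 13; 15; 7; 8; 1];
  [:: 14; 16; 8; 9; 2];
  [:: 10; 17; 9; 5; 3];
  [:: 16; 23; 10; 11; 9];
  [:: 17; 24; 11; 12; 5];
  [:: 18; 20; 12; 13; 6];
  [:: 19; 21; 13; 14; 7];
  [:: 15; 22; 14; 10; 8];
  [:: 21; 3; 15; 16; 14];
  [:: 22; 4; 16; 17; 10];
  [:: 23; 0; 17; 18; 11];
  [:: 24; 1; 18; 19; 12];
  [:: 20; 2; 19; 15; 13];
  [:: 1; 8; 20; 21; 19];
  [:: 2; 9; 21; 22; 15];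
  [:: 3; 5; 22; 23; 16];
  [:: 4; 6; 23; 24; 17];
  [:: 0; 7; 24; 20; 18];
  [:: 0; 26; 6; 16; 3];
  [:: 1; 26; 7; 17; 4];
  [:: 2; 26; 8; 18; 0];
  [:: 3; 26; 9; 19; 1];
  [:: 4; 26; 5; 15; 2];
  [:: 5; 26; 11; 21; 8];
  [:: 6; 26; 12; 22; 9];
  [:: 7; 26; 13; 23; 5];
  [:: 8; 26; 14; 24; 6];
  [:: 9; 26; 10; 20; 7];
  [:: 10; 26; 16; 1; 13];
  [:: 11; 26; 17; 2; 14];
  [:: 12; 26; 18; 3; 10];
  [:: 13; 26; 19; 4; 11];
  [:: 14; 26; 15; 0; 12];
  [:: 15; 26; 21; 6; 18];
  [:: 16; 26; 22; 7; 19];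
  [:: 17; 26; 23; 8; 15];
  [:: 18; 26; 24; 9; 16];
  [:: 19; 26; 20; 5; 17];
  [:: 20; 26; 1; 11; 23];
  [:: 21; 26; 2; 12; 24];
  [:: 22; 26; 3; 13; 20];
  [:: 23; 26; 4; 14; 21];
  [:: 24; 26; 0; 10; 22];
  [:: 0; 20; 2; 13; 21];
  [:: 1; 21; 3; 14; 22];
  [:: 2; 22; 4; 10; 23];
  [:: 3; 23; 0; 11; 24];
  [:: 4; 24; 1; 12; 20];
  [:: 5; 0; 7; 18; 1];
  [:: 6; 1; 8; 19; 2];
  [:: 7; 2; 9; 15; 3];
  [:: 8; 3; 5; 16; 4];
  [:: 9; 4; 6; 17; 0];
  [:: 10; 5; 12; 23; 6];
  [:: 11; 6; 13; 24; 7];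
  [:: 12; 7; 14; 20; 8];
  [:: 13; 8; 10; 21; 9];
  [:: 14; 9; 11; 22; 5];
  [:: 15; 10; 17; 3; 11];
  [:: 16; 11; 18; 4; 12];
  [:: 17; 12; 19; 0; 13];
  [:: 18; 13; 15; 1; 14];
  [:: 19; 14; 16; 2; 10];
  [:: 20; 15; 22; 8; 16];
  [:: 21; 16; 23; 9; 17];
  [:: 22; 17; 24; 5; 18];
  [:: 23; 18; 20; 6; 19];
  [:: 24; 19; 21; 7; 15];
  [:: 0; 8; 2; 14; 3];
  [:: 1; 9; 3; 10; 4];
  [:: 2; 5; 4; 11; 0];
  [:: 3; 6; 0; 12; 1];
  [:: 4; 7; 1; 13; 2];
  [:: 5; 13; 7; 19; 8];
  [:: 6; 14; 8; 15; 9];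
  [:: 7; 10; 9; 16; 5];
  [:: 8; 11; 5; 17; 6];
  [:: 9; 12; 6; 18; 7];
  [:: 10; 18; 12; 24; 13];
  [:: 11; 19; 13; 20; 14];
  [:: 12; 15; 14; 21; 10];
  [:: 13; 16; 10; 22; 11];
  [:: 14; 17; 11; 23; 12];
  [:: 15; 23; 17; 4; 18];
  [:: 16; 24; 18; 0; 19];
  [:: 17; 20; 19; 1; 15];
  [:: 18; 21; 15; 2; 16];
  [:: 19; 22; 16; 3; 17];
  [:: 20; 3; 22; 9; 23];
  [:: 21; 4; 23; 5; 24];
  [:: 22; 0; 24; 6; 20];
  [:: 23; 1; 20; 7; 21];
  [:: 24; 2; 21; 8; 22]].

Definition L102 : seq (seq nat) := [:: [:: 18; 11; 9; 0; 19];
  [:: 17; 12; 9; 0; 10];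
  [:: 9; 0; 16; 13; 3];
  [:: 9; 0; 15; 14; 5];
  [:: 8; 1; 19; 10; 9];
  [:: 17; 12; 8; 1; 18];
  [:: 16; 13; 8; 1; 11];
  [:: 8; 1; 15; 14; 4];
  [:: 7; 2; 19; 10; 0];
  [:: 7; 2; 18; 11; 8];
  [:: 16; 13; 7; 2; 17];
  [:: 15; 14; 7; 2; 12];
  [:: 19; 10; 6; 3; 13];
  [:: 6; 3; 18; 11; 1];
  [:: 6; 3; 17; 12; 7];
  [:: 15; 14; 6; 3; 16];
  [:: 19; 10; 5; 4; 15];
  [:: 18; 11; 5; 4; 14];
  [:: 5; 4; 17; 12; 2];
  [:: 5; 4; 16; 13; 6];
  [:: 3; 13; 0; 10; 20];
  [:: 8; 17; 0; 11; 20];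
  [:: 1; 18; 0; 12; 20];
  [:: 6; 19; 0; 13; 20];
  [:: 4; 10; 0; 14; 20];
  [:: 8; 13; 0; 15; 20];
  [:: 2; 15; 0; 16; 20];
  [:: 2; 14; 0; 17; 20];
  [:: 6; 17; 0; 18; 20];
  [:: 3; 16; 0; 19; 20];
  [:: 0; 11; 1; 10; 20];
  [:: 7; 17; 1; 11; 20];
  [:: 4; 13; 1; 12; 20];
  [:: 7; 15; 1; 13; 20];
  [:: 3; 10; 1; 14; 20];
  [:: 5; 11; 1; 15; 20];
  [:: 9; 15; 1; 16; 20];
  [:: 3; 16; 1; 17; 20];
  [:: 5; 17; 1; 18; 20];
  [:: 7; 14; 1; 19; 20];
  [:: 8; 11; 2; 10; 20];
  [:: 9; 13; 2; 11; 20];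
  [:: 0; 10; 2; 12; 20];
  [:: 8; 17; 2; 13; 20];
  [:: 6; 19; 2; 14; 20];
  [:: 8; 19; 2; 15; 20];
  [:: 8; 14; 2; 16; 20];
  [:: 4; 18; 2; 17; 20];
  [:: 1; 14; 2; 18; 20];
  [:: 4; 13; 2; 19; 20];
  [:: 5; 18; 3; 10; 20];
  [:: 7; 10; 3; 11; 20];
  [:: 0; 11; 3; 12; 20];
  [:: 9; 19; 3; 13; 20];
  [:: 5; 19; 3; 14; 20];
  [:: 5; 13; 3; 15; 20];
  [:: 5; 12; 3; 16; 20];
  [:: 2; 19; 3; 17; 20];
  [:: 0; 14; 3; 18; 20];
  [:: 7; 15; 3; 19; 20];
  [:: 6; 11; 4; 10; 20];
  [:: 8; 12; 4; 11; 20];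
  [:: 3; 15; 4; 12; 20];
  [:: 8; 10; 4; 13; 20];
  [:: 3; 13; 4; 14; 20];
  [:: 6; 19; 4; 15; 20];
  [:: 3; 11; 4; 16; 20];
  [:: 9; 11; 4; 17; 20];
  [:: 1; 16; 4; 18; 20];
  [:: 8; 16; 4; 19; 20];
  [:: 9; 11; 5; 10; 20];
  [:: 2; 16; 5; 11; 20];
  [:: 9; 18; 5; 12; 20];
  [:: 1; 19; 5; 13; 20];
  [:: 9; 16; 5; 14; 20];
  [:: 0; 10; 5; 15; 20];
  [:: 8; 17; 5; 16; 20];
  [:: 0; 19; 5; 17; 20];
  [:: 7; 14; 5; 18; 20];
  [:: 7; 16; 5; 19; 20];
  [:: 8; 15; 6; 10; 20];
  [:: 8; 14; 6; 11; 20];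
  [:: 2; 16; 6; 12; 20];
  [:: 2; 15; 6; 13; 20];
  [:: 5; 17; 6; 14; 20];
  [:: 5; 16; 6; 15; 20];
  [:: 4; 14; 6; 16; 20];
  [:: 8; 19; 6; 17; 20];
  [:: 9; 14; 6; 18; 20];
  [:: 9; 16; 6; 19; 20];
  [:: 1; 18; 7; 10; 20];
  [:: 6; 13; 7; 11; 20];
  [:: 3; 18; 7; 12; 20];
  [:: 4; 18; 7; 13; 20];
  [:: 9; 11; 7; 14; 20];
  [:: 9; 10; 7; 15; 20];
  [:: 0; 11; 7; 16; 20];
  [:: 4; 14; 7; 17; 20];
  [:: 0; 19; 7; 18; 20];
  [:: 6; 12; 7; 19; 20];
  [:: 0; 18; 8; 10; 20];
  [:: 3; 19; 8; 11; 20];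
  [:: 0; 16; 8; 12; 20];
  [:: 6; 12; 8; 13; 20];
  [:: 9; 13; 8; 14; 20];
  [:: 3; 16; 8; 15; 20];
  [:: 9; 11; 8; 16; 20];
  [:: 7; 18; 8; 17; 20];
  [:: 5; 15; 8; 18; 20];
  [:: 0; 14; 8; 19; 20];
  [:: 1; 12; 9; 10; 20];
  [:: 1; 19; 9; 11; 20];
  [:: 2; 19; 9; 12; 20];
  [:: 7; 12; 9; 13; 20];
  [:: 4; 19; 9; 14; 20];
  [:: 6; 17; 9; 15; 20];
  [:: 4; 12; 9; 16; 20];
  [:: 8; 10; 9; 17; 20];
  [:: 4; 10; 9; 18; 20];
  [:: 5; 15; 9; 19; 20];
  [:: 6; 16; 0; 10; 21];
  [:: 6; 15; 0; 11; 21];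
  [:: 4; 19; 0; 12; 21];
  [:: 4; 11; 0; 13; 21];
  [:: 6; 12; 0; 14; 21];
  [:: 4; 18; 0; 15; 21];
  [:: 4; 17; 0; 16; 21];
  [:: 1; 13; 0; 17; 21];
  [:: 2; 13; 0; 18; 21];
  [:: 2; 11; 0; 19; 21];
  [:: 5; 16; 1; 10; 21];
  [:: 4; 14; 1; 11; 21];
  [:: 7; 16; 1; 12; 21];
  [:: 3; 11; 1; 13; 21];
  [:: 5; 12; 1; 14; 21];
  [:: 3; 18; 1; 15; 21];
  [:: 0; 14; 1; 16; 21];
  [:: 4; 19; 1; 17; 21];
  [:: 9; 13; 1; 18; 21];
  [:: 0; 15; 1; 19; 21];
  [:: 5; 17; 2; 10; 21];
  [:: 6; 17; 2; 11; 21];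
  [:: 1; 11; 2; 12; 21];
  [:: 1; 10; 2; 13; 21];
  [:: 3; 11; 2; 14; 21];
  [:: 1; 17; 2; 15; 21];
  [:: 4; 10; 2; 16; 21];
  [:: 9; 16; 2; 17; 21];
  [:: 8; 12; 2; 18; 21];
  [:: 1; 16; 2; 19; 21];
  [:: 2; 15; 3; 10; 21];
  [:: 5; 17; 3; 11; 21];
  [:: 9; 14; 3; 12; 21];
  [:: 2; 12; 3; 13; 21];
  [:: 7; 16; 3; 14; 21];
  [:: 0; 17; 3; 15; 21];
  [:: 9; 10; 3; 16; 21];
  [:: 7; 13; 3; 17; 21];
  [:: 2; 16; 3; 18; 21];
  [:: 1; 12; 3; 19; 21];
  [:: 1; 15; 4; 10; 21];
  [:: 2; 15; 4; 11; 21];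
  [:: 2; 14; 4; 12; 21];
  [:: 6; 17; 4; 13; 21];
  [:: 8; 18; 4; 14; 21];
  [:: 8; 17; 4; 15; 21];
  [:: 7; 15; 4; 16; 21];
  [:: 3; 10; 4; 17; 21];
  [:: 6; 12; 4; 18; 21];
  [:: 3; 18; 4; 19; 21];
  [:: 7; 13; 5; 10; 21];
  [:: 7; 12; 5; 11; 21];
  [:: 0; 13; 5; 12; 21];
  [:: 2; 14; 5; 13; 21];
  [:: 0; 11; 5; 14; 21];
  [:: 2; 12; 5; 15; 21];
  [:: 0; 18; 5; 16; 21];
  [:: 7; 15; 5; 17; 21];
  [:: 6; 13; 5; 18; 21];
  [:: 2; 18; 5; 19; 21];
  [:: 2; 18; 6; 10; 21];
  [:: 1; 16; 6; 11; 21];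
  [:: 5; 10; 6; 12; 21];
  [:: 9; 10; 6; 13; 21];
  [:: 1; 13; 6; 14; 21];
  [:: 1; 12; 6; 15; 21];
  [:: 8; 18; 6; 16; 21];
  [:: 1; 10; 6; 17; 21];
  [:: 1; 19; 6; 18; 21];
  [:: 5; 11; 6; 19; 21];
  [:: 6; 14; 7; 10; 21];
  [:: 4; 19; 7; 11; 21];
  [:: 4; 10; 7; 12; 21];
  [:: 8; 19; 7; 13; 21];
  [:: 0; 13; 7; 14; 21];
  [:: 0; 12; 7; 15; 21];
  [:: 6; 17; 7; 16; 21];
  [:: 0; 10; 7; 17; 21];
  [:: 6; 15; 7; 18; 21];
  [:: 9; 17; 7; 19; 21];
  [:: 3; 12; 8; 10; 21];
  [:: 7; 15; 8; 11; 21];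
  [:: 7; 14; 8; 12; 21];
  [:: 5; 11; 8; 13; 21];
  [:: 5; 10; 8; 14; 21];
  [:: 9; 12; 8; 15; 21];
  [:: 7; 10; 8; 16; 21];
  [:: 3; 14; 8; 17; 21];
  [:: 3; 13; 8; 18; 21];
  [:: 5; 12; 8; 19; 21];
  [:: 2; 14; 9; 10; 21];
  [:: 3; 15; 9; 11; 21];
  [:: 6; 11; 9; 12; 21];
  [:: 5; 17; 9; 13; 21];
  [:: 1; 17; 9; 14; 21];
  [:: 4; 13; 9; 15; 21];
  [:: 7; 18; 9; 16; 21];
  [:: 3; 18; 9; 17; 21];
  [:: 2; 15; 9; 18; 21];
  [:: 8; 18; 9; 19; 21]].

Theorem lemma3p6 (g n : nat) :
  (g, n) = (5, 3) \/ (g, n) = (5, 5) \/ (g, n) = (10, 2) ->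
  CS_K4e_exists g n 2.
Proof.
case=> [[-> ->]|[[-> ->]|[-> ->]]].
- apply: (gen 5 3 16 L53); vm_compute; reflexivity.
- apply: (gen 5 5 26 L55); vm_compute; reflexivity.
- apply: (gen 10 2 21 L102); vm_compute; reflexivity.
Qed.
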